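(* Let $\mathcal{M}$, $\sigma_*$, $\sigma$, $\bar x$, $\delta$, $\phi$, $\mathcal{D}$ and $\bar\phi$ be as described in the context. Then $\bar\phi$ is well defined with values in $N^{\mathrm{red}}_{\mathcal{M}}(\bar x)$, it is locally symmetric in the sense that $\bar\phi(\sigma'x)=\bar\phi(x)$ for all $x\in\mathcal{D}$ and all $\sigma'\in\Sigma^n$ with $\sigma'\bar x=\bar x$, and it is a local equation of $\mathcal{M}$ around $\bar x$: for $x\in\mathcal{D}$ one has $\bar\phi(x)=0$ iff $x\in\mathcal{M}\cap B(\bar x,\delta)$, and the Jacobian of $\bar\phi$ at $\bar x$, as a linear map from $T_{\mathcal{M}}(\bar x)\oplus N^{\mathrm{red}}_{\mathcal{M}}(\bar x)$ to $N^{\mathrm{red}}_{\mathcal{M}}(\bar x)$, is onto.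
   Context: $\Sigma^n$ permutations of $\mathbb{N}_n$ acting by $(\sigma x)_i=x_{\sigma^{-1}(i)}$; $P(\sigma)$ orbit partition; $P(x)$ partition by equal coordinates; $\Delta(\sigma)=\{x:P(x)=P(\sigma)\}$; $\Delta(\sigma)^{\perp\perp}=\{x:x_i=x_j$ whenever $i,j$ lie in the same set of $P(\sigma)\}$ and $\Delta(\sigma)^\perp$ its orthogonal complement; $\mathbb{R}^n_\ge=\{x:x_1\ge\cdots\ge x_n\}$; $B(x,\delta)$ open ball. A set $S$ is locally symmetric if $S\cap\mathbb{R}^n_\ge\ne\emptyset$ and each $x\in S$ has $\delta>0$ with $\sigma(S\cap B(x,\delta))=S\cap B(x,\delta)$ for all $y\in S\cap B(x,\delta)$, all $\sigma$ with $\sigma y=y$ (strongly locally symmetric: $\sigma S=S$ for all $y\in S$, all $\sigma$ with $\sigma y=y$). $\mathcal{M}$ is a locally symmetric $C^2$ submanifold (connected, without boundary) of dimension $d$, with characteristic permutation $\sigma_*$ (i.e. $\mathcal{M}\cap B(y,\rho)\subset\Delta(\sigma_* )$ for some $y\in\mathcal{M}$, $\rho>0$); $\kappa_*=|\mathbb{N}_n\setminus\mathrm{supp}(\sigma_* )|$. For $x\in\mathbb{R}^n$, $x^F\in\mathbb{R}^{\kappa_*}$ collects the coordinates with indices in $\mathbb{N}_n\setminus\mathrm{supp}(\sigma_* )$ and $x^M\in\mathbb{R}^{n-\kappa_*}$ the others (in increasing index order), and $x^F\otimes x^M$ denotes the inverse reassembling. Fix $\bar x\in\mathcal{M}\cap\Delta(\sigma)$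 and $\delta>0$ such that: $B(\bar x,\delta)$ meets only strata $\Delta(\sigma')$ with $P(\sigma')$ refining $P(\sigma)$; $\mathcal{M}\cap B(\bar x,\delta)$ is strongly locally symmetric; and the orthogonal projection $\bar\pi_T$ onto $\bar x+T_{\mathcal{M}}(\bar x)$ restricted to $\mathcal{M}\cap B(\bar x,\delta)$ is a diffeomorphism onto its image. Let $\phi:(\bar x+T_{\mathcal{M}}(\bar x))\cap B(\bar x,\delta)\to N_{\mathcal{M}}(\bar x)$ be the $C^2$ map with $\mathcal{M}\cap B(\bar x,\delta)=\{x+\phi(x)\}$. Set $N^{\mathrm{red}}_{\mathcal{M}}(\bar x)=N_{\mathcal{M}}(\bar x)\cap\Delta(\sigma)^{\perp\perp}$, choose $\delta_1,\delta_2>0$ with $\mathcal{B}:=B(\bar x^F,\delta_1)\otimes B(\bar x^M,\delta_2)\subset B(\bar x,\delta)$, and $\mathcal{D}=(\bar x+T_{\mathcal{M}}(\bar x)\oplus N^{\mathrm{red}}_{\mathcal{M}}(\bar x))\cap\mathcal{B}$. Let $\bar\pi^{\mathrm{red}}_N$ be the orthogonal projection onto $\bar x+N^{\mathrm{red}}_{\mathcal{M}}(\bar x)$ and define $\bar\phi(x)=\bar x+\phi(\bar\pi_T(x))-\bar\pi^{\mathrm{red}}_N(x)$ for $x\in\mathcal{D}$. *)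

(* Defs.v *)
From HB Require Import structures.
From mathcomp Require Import all_boot all_order all_algebra all_fingroup.
From mathcomp Require Import all_classical all_reals all_analysis.
Set Implicit Arguments. Unset Strict Implicit. Unset Printing Implicit Defensive.
Import Order.TTheory GRing.Theory Num.Theory.
Import numFieldNormedType.Exports.
Local Open Scope classical_set_scope.
Local Open Scope ring_scope.

Section Defs.
Variables (R : realType) (n : nat).
Local Notation V := 'rV[R]_n.

Definition dot (x y : V) : R := \sum_(i < n) x 0 i * y 0 i.
Definition enorm (x : V) : R := Num.sqrt (dot x x).
Definition eball (x : V) (r : R) : set V := [set y | enorm (y - x) < r].

Definition pdist (I : pred 'I_n) (x y : V) : R :=
  Num.sqrt (\sum_(i < n | I i) (x 0 i - y 0 i) ^+ 2).

Definition pact (s : 'S_n) (x : V) : V := \row_i x 0 ((s^-1)%g i).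

(* Delta(s) : x with P(x) = P(s) *)
Definition Delta (s : 'S_n) : set V :=
  [set x | forall i j : 'I_n, (x 0 i = x 0 j) <-> (j \in porbit s i)].
(* Delta(s)^{perp perp} *)
Definition Deltapp (s : 'S_n) : set V :=
  [set x | forall i j : 'I_n, j \in porbit s i -> x 0 i = x 0 j].

Definition refines (s' s : 'S_n) : Prop :=
  forall i j : 'I_n, j \in porbit s' i -> j \in porbit s i.

Definition Rge_cone : set V :=
  [set x | forall i j : 'I_n, (i <= j)%N -> x 0 j <= x 0 i].

Definition locally_symmetric (S : set V) : Prop :=
  (S `&` Rge_cone !=set0) /\
  forall x, S x -> exists2 d : R, 0 < d &
    forall y (s : 'S_n), (S `&` eball x d) y -> pact s y = y ->
      pact s @` (S `&` eball x d) = S `&` eball x d.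

Definition strongly_locally_symmetric (S : set V) : Prop :=
  (S `&` Rge_cone !=set0) /\
  forall y (s : 'S_n), S y -> pact s y = y -> pact s @` S = S.

Definition C2_on (m : nat) (U : set V) (f : V -> 'rV[R]_m) : Prop :=
  open U /\
  forall x, U x -> forall u v : V,
    [/\ derivable f x u, derivable ('D_u f) x v,
        {for x, continuous ('D_u f)} & {for x, continuous ('D_v ('D_u f))}].

Definition C2_submanifold (d : nat) (M : set V) : Prop :=
  [/\ (d <= n)%N, connected M &
  forall x, M x -> exists U : set V, exists F : V -> 'rV[R]_(n - d),
    [/\ open U, U x, C2_on U F,
        (forall w, exists v, 'D_v F x = w) &
        M `&` U = [set y | U y /\ F y = 0]]].

Definition tangent_space (M : set V) (x : V) : set V :=
  [set v | exists g : R -> V, exists2 e : R, 0 < e &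
     [/\ forall t, `|t| < e -> M (g t), g 0 = x,
         derivable g 0 1 & 'D_1 g 0 = v]].

Definition normal_sp (M : set V) (x : V) : set V :=
  [set w | forall v, tangent_space M x v -> dot w v = 0].

Definition is_orth_proj (S : set V) (p : V -> V) : Prop :=
  forall y, S (p y) /\ forall v, S v -> dot (y - p y) v = 0.

Definition characteristic_perm (M : set V) (s : 'S_n) : Prop :=
  exists y, M y /\ exists2 rho : R, 0 < rho & M `&` eball y rho `<=` Delta s.

Definition subsum (A B : set V) : set V := [set a + b | a in A & b in B].

(* phibar x = xbar + phi(piT x) - piNred x, with piT x = xbar + pT (x - xbar),
   piNred x = xbar + pN (x - xbar) *)
Definition phibar (xbar : V) (phi pT pN : V -> V) (x : V) : V :=
  xbar + phi (xbar + pT (x - xbar)) - (xbar + pN (x - xbar)).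

End Defs.

(* Main.v *)
Require Import Defs.
From HB Require Import structures.
From mathcomp Require Import all_boot all_order all_algebra all_fingroup.
From mathcomp Require Import all_classical all_reals all_analysis.
From mathcomp Require Import ring lra.
Import Order.TTheory GRing.Theory Num.Theory.
Import numFieldNormedType.Exports.
Local Open Scope classical_set_scope.
Local Open Scope ring_scope.
Section Alg.
Set Implicit Arguments. Unset Strict Implicit.
Variables (R : realType) (n : nat).
Local Notation V := 'rV[R]_n.
Implicit Types (x y z u v w : V) (s : 'S_n).

Lemma dotC x y : dot x y = dot y x.
Proof. by apply: eq_bigr => i _; rewrite mulrC. Qed.

Lemma dotDl x y z : dot (x + y) z = dot x z + dot y z.
Proof. by rewrite /dot -big_split; apply: eq_bigr => i _; rewrite !mxE mulrDl. Qed.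

Lemma dotZl (a : R) x y : dot (a *: x) y = a * dot x y.
Proof. by rewrite /dot mulr_sumr; apply: eq_bigr => i _; rewrite !mxE mulrA. Qed.

Lemma dotNl x y : dot (- x) y = - dot x y.
Proof. by rewrite -scaleN1r dotZl mulN1r. Qed.

Lemma dotBl x y z : dot (x - y) z = dot x z - dot y z.
Proof. by rewrite dotDl dotNl. Qed.

Lemma dot0l x : dot 0 x = 0.
Proof. by rewrite -(scale0r x) dotZl mul0r. Qed.

Lemma dotDr x y z : dot x (y + z) = dot x y + dot x z.
Proof. by rewrite dotC dotDl !(dotC x). Qed.
Lemma dotZr (a : R) x y : dot x (a *: y) = a * dot x y.
Proof. by rewrite dotC dotZl dotC. Qed.
Lemma dotNr x y : dot x (- y) = - dot x y.
Proof. by rewrite dotC dotNl dotC. Qed.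
Lemma dotBr x y z : dot x (y - z) = dot x y - dot x z.
Proof. by rewrite dotDr dotNr. Qed.
Lemma dot0r x : dot x 0 = 0.
Proof. by rewrite dotC dot0l. Qed.

Lemma dot_ge0 x : 0 <= dot x x.
Proof. by apply: sumr_ge0 => i _; rewrite -expr2 sqr_ge0. Qed.

Lemma dot_eq0 x : dot x x = 0 -> x = 0.
Proof.
move=> /eqP; rewrite psumr_eq0; last by move=> i _; rewrite -expr2 sqr_ge0.
move=> /allP H; apply/rowP => i; rewrite mxE.
by have /(_ (mem_index_enum i)) := H i; rewrite /= mulf_eq0 orbb => /eqP.
Qed.

Lemma proj_uniq (S : set V) y q q' : S q -> S q' ->
  (forall v, S v -> dot (y - q) v = 0) -> (forall v, S v -> dot (y - q') v = 0) ->
  q = q'.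
Proof.
move=> Sq Sq' H H'; apply/eqP; rewrite -subr_eq0; apply/eqP/dot_eq0.
have E : q - q' = (y - q') - (y - q) by rewrite opprB [RHS]addrC addrA subrK.
rewrite {1}E dotBl !dotBr (H _ Sq) (H _ Sq') (H' _ Sq) (H' _ Sq').
by rewrite !subrr.
Qed.

Lemma pactE (s : 'S_n) x i : pact s x 0 i = x 0 ((s^-1)%g i).
Proof. by rewrite mxE. Qed.

Lemma pactD s x y : pact s (x + y) = pact s x + pact s y.
Proof. by apply/rowP => i; rewrite !mxE. Qed.
Lemma pactZ s (a : R) x : pact s (a *: x) = a *: pact s x.
Proof. by apply/rowP => i; rewrite !mxE. Qed.
Lemma pactN s x : pact s (- x) = - pact s x.
Proof. by apply/rowP => i; rewrite !mxE. Qed.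
Lemma pactB s x y : pact s (x - y) = pact s x - pact s y.
Proof. by rewrite pactD pactN. Qed.
Lemma pact0 s : pact s (0 : V) = 0.
Proof. by apply/rowP => i; rewrite !mxE. Qed.

Lemma pactK s x : pact (s^-1)%g (pact s x) = x.
Proof. by apply/rowP => i; rewrite !mxE invgK permK. Qed.
Lemma pactKV s x : pact s (pact (s^-1)%g x) = x.
Proof. by apply/rowP => i; rewrite !mxE invgK permKV. Qed.

Lemma dot_pact s x y : dot (pact s x) y = dot x (pact (s^-1)%g y).
Proof.
rewrite /dot (reindex_inj (@perm_inj _ s)) /=.
by apply: eq_bigr => i _; rewrite !mxE invgK permK.
Qed.

Lemma pythag x y : dot x y = 0 -> dot (x + y) (x + y) = dot y y + dot x x.
Proof.
move=> H; rewrite dotDl !dotDr H (dotC y x) H addr0 add0r addrC.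
by [].
Qed.

End Alg.
Section C1.
Set Implicit Arguments. Unset Strict Implicit.
Variable R : realType.

Lemma rv_entry_le m (x : 'rV[R]_m) i : `|x 0 i| <= `|x|.
Proof.
rewrite [leRHS]/Num.Def.normr/= mx_normrE.
by apply: le_trans; last exact: (le_bigmax _ _ (0, i)).
Qed.

Lemma rv_norm_le m (x : 'rV[R]_m) (c : R) : 0 <= c -> (forall i, `|x 0 i| <= c) -> `|x| <= c.
Proof.
move=> c0 H; rewrite [leLHS]/Num.Def.normr/= mx_normrE.
apply: bigmax_le => // -[i j] _ /=; by rewrite (ord1 i).
Qed.

Lemma seg_bound m (g : R -> 'rV[R]_m) (c : R) (Dv : 'rV[R]_m) (eps : R) :
 (forall t, `|t| <= `|c| -> derivable g t 1) ->
 (forall t, `|t| <= `|c| -> `|'D_1 g t - Dv| <= eps) ->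
 `|g c - g 0 - c *: Dv| <= eps * `|c|.
Proof.
move=> Hd Hb.
have eps0 : 0 <= eps by apply: le_trans (Hb 0 _); rewrite ?normr0 // normr_ge0.
apply: rv_norm_le; first by rewrite mulr_ge0.
move=> j.
pose F : R -> R := (fun t => g t 0 j) - (Dv 0 j) *: (@id R).
have FE t : F t = g t 0 j - Dv 0 j * t by [].
have HF (t : R) : `|t| <= `|c| -> is_derive t 1 F ('D_1 g t 0 j - Dv 0 j).
  move=> tc; have dg := Hd t tc.
  have d1 : derivable (fun t => g t 0 j) t 1 by move/derivable_mxP : dg; apply.
  have e1 : 'D_1 (fun t => g t 0 j) t = 'D_1 g t 0 j by rewrite (derive_mx dg) mxE.
  have h1 : is_derive t 1 (fun t => g t 0 j) ('D_1 g t 0 j).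
    by apply: DeriveDef; rewrite ?e1.
  have h2 : is_derive t 1 ((Dv 0 j) *: (@id R)) (Dv 0 j *: (1 : R)).
    by apply: is_deriveZ.
  have H := is_deriveB h1 h2. rewrite /GRing.scale /= mulr1 in H. exact: H.
have Hbd (t : R) : `|t| <= `|c| -> `|'D_1 g t 0 j - Dv 0 j| <= eps.
  move=> tc; apply: le_trans (Hb t tc).
  by apply: le_trans (rv_entry_le _ j); rewrite !mxE.
have -> : (g c - g 0 - c *: Dv) 0 j = F c - F 0.
  rewrite !mxE !FE mulr0 subr0; lra.
have [c0|c0] := leP 0 c.
- have cont : {within `[0, c], continuous F}.
    apply: derivable_within_continuous.
    move=> t; rewrite in_itv /= => /andP[t0 tc].
    apply: (@ex_derive _ _ _ _ _ _ _ (HF t _)).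
    by rewrite !ger0_norm.
  have HFi t : t \in `]0, c[ -> is_derive t 1 F ('D_1 g t 0 j - Dv 0 j).
    rewrite in_itv /= => /andP[t0 tc]; apply: HF.
    by rewrite !ger0_norm // ltW.
  have [xi xiin ->] := MVT_segment c0 HFi cont.
  rewrite subr0 normrM [`|c|]ger0_norm // ler_wpM2r //.
  apply: Hbd; move: xiin; rewrite in_itv /= => /andP[x0 xc].
  by rewrite !ger0_norm.
- have c0' : c <= 0 by rewrite ltW.
  have cont : {within `[c, 0], continuous F}.
    apply: derivable_within_continuous.
    move=> t; rewrite in_itv /= => /andP[t0 tc].
    apply: (@ex_derive _ _ _ _ _ _ _ (HF t _)).
    by rewrite !ler0_norm // lerN2.
  have HFi t : t \in `]c, 0[ -> is_derive t 1 F ('D_1 g t 0 j - Dv 0 j).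
    rewrite in_itv /= => /andP[t0 tc]; apply: HF.
    by rewrite !ler0_norm ?lerN2 ?ltW.
  have [xi xiin E] := MVT_segment c0' HFi cont.
  rewrite distrC E sub0r normrM [`|- c|]normrN ler_wpM2r //.
  apply: Hbd; move: xiin; rewrite in_itv /= => /andP[x0 xc].
  by rewrite !ler0_norm // lerN2.
Qed.
End C1.
Section C1b.
Set Implicit Arguments. Unset Strict Implicit.
Variable R : realType.

Lemma line_derivable (V W : normedModType R) (f : V -> W) (p e : V) (t : R) :
  derivable (fun s : R => f (p + s *: e)) t 1 <-> derivable f (p + t *: e) e.
Proof.
rewrite /derivable; set g1 := fun h => h^-1 *: _; set g2 := fun h => h^-1 *: _.
suff -> : g1 = g2 by [].
rewrite funeqE /g1 /g2 => h /=.
by rewrite [h *: (1 : R)]mulr1 scalerDl addrCA.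
Qed.

Lemma line_derive (V W : normedModType R) (f : V -> W) (p e : V) (t : R) :
  'D_1 (fun s : R => f (p + s *: e)) t = 'D_e f (p + t *: e).
Proof.
rewrite /derive; set g1 := fun h => h^-1 *: _; set g2 := fun h => h^-1 *: _.
suff -> : g1 = g2 by [].
rewrite funeqE /g1 /g2 => h /=.
by rewrite [h *: (1 : R)]mulr1 scalerDl addrCA.
Qed.

Lemma mulmx_bound n m (A : 'M[R]_(n, m)) (x : 'rV[R]_n) :
  `|x *m A| <= (\sum_(k < n) `|row k A|) * `|x|.
Proof.
rewrite mulmx_sum_row mulr_suml.
apply: le_trans (ler_norm_sum _ _ _) _.
apply: ler_sum => k _; rewrite normrZ mulrC ler_wpM2l //.
exact: rv_entry_le.
Qed.

Lemma mulmx_cont n m (A : 'M[R]_(n, m)) : continuous (fun x : 'rV[R]_n => x *m A).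
Proof.
move=> p; apply/(@cvgrPdist_le _ _ _ _ (nbhs_filter p)) => e e0.
set C := \sum_(k < n) `|row k A|.
have C0 : 0 <= C by apply: sumr_ge0.
apply/nbhs_ballP; exists (e / (C + 1)) => [|y].
  by rewrite /= divr_gt0 // ltr_wpDl.
rewrite -ball_normE /= => py.
rewrite -mulmxBl; apply: le_trans (mulmx_bound _ _) _.
apply: le_trans (_ : C * (e / (C + 1)) <= e).
  by rewrite ler_wpM2l // ltW.
rewrite mulrCA ger_pMr // ler_pdivrMr ?ltr_wpDl // mul1r.
by rewrite lerDl.
Qed.

End C1b.
Section C1c.
Set Implicit Arguments. Unset Strict Implicit.
Variable R : realType.

Lemma C1_diff n m (f : 'rV[R]_n -> 'rV[R]_m) (a : 'rV[R]_n) (r : R) :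
  0 < r -> (forall x, `|x - a| < r -> forall v, derivable f x v) ->
  (forall v, {for a, continuous ('D_v f)}) -> differentiable f a.
Proof.
move=> r0 Hder Hcont.
pose J := \matrix_(k < n) 'D_(delta_mx 0 k) f a.
have hJ (h : 'rV[R]_n) : h *m J = \sum_(k < n) h 0 k *: 'D_(delta_mx 0 k) f a.
  by rewrite mulmx_sum_row; apply: eq_bigr => k _; rewrite rowK.
pose L : {linear 'rV[R]_n -> 'rV[R]_m} := mulmxr J.
have Lcont : continuous L by exact: mulmx_cont.
have Ho : (f \o shift a : 'rV[R]_n -> 'rV[R]_m) = cst (f a) + (L : 'rV[R]_n -> 'rV[R]_m) +o_ (0 : 'rV[R]_n) id.
  apply/eqaddoP => eps eps0.
  pose e' := eps / n.+1%:R.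
  have e'0 : 0 < e' by rewrite divr_gt0.
  have Hc : \forall z \near a, forall k : 'I_n,
      `|'D_(delta_mx 0 k) f a - 'D_(delta_mx 0 k) f z| <= e'.
    apply: (@filter_forall _ _ _ _ (nbhs_filter a)) => k.
    by have := Hcont (delta_mx 0 k); move/(@cvgrPdist_le _ _ _ _ (nbhs_filter a)) => /(_ _ e'0).
  move/nbhs_ballP : Hc => [d1 /= d10 Hd1].
  pose d := Num.min d1 r.
  have d0 : 0 < d by rewrite lt_min d10 r0.
  apply/nbhs_ballP; exists d => // h.
  rewrite -ball_normE /= sub0r normrN => hd.
  have -> : (f \o +%R^~ a - (cst (f a) + mulmxr J)) h = f (h + a) - (f a + h *m J) by [].
  pose p (k : nat) := a + \row_(i < n) (if (i < k)%N then h 0 i else 0).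
  have p0 : p 0%N = a.
    by rewrite /p; apply/rowP => i; rewrite !mxE addr0.
  have pn : p n = h + a.
    by rewrite /p addrC; congr (_ + _); apply/rowP => i; rewrite !mxE ltn_ord.
  have pS (k : 'I_n) : p k.+1 = p k + h 0 k *: delta_mx 0 k.
    rewrite /p -addrA; congr (_ + _); apply/rowP => i; rewrite !mxE ltnS.
    case: (ltngtP i k) => [ik|ik|ik].
    - have -> : (i == k) = false by apply/eqP => E; move: ik; rewrite E ltnn.
      by rewrite andbF mulr0 addr0.
    - have -> : (i == k) = false by apply/eqP => E; move: ik; rewrite E ltnn.
      by rewrite andbF mulr0 addr0.
    - have ik' : i = k := val_inj ik.
      by rewrite ik' !eqxx mulr1 add0r.
  have pdist (k : 'I_n) (t : R) : `|t| <= `|h 0 k| ->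
      `|(p k + t *: delta_mx 0 k) - a| <= `|h|.
    move=> tk; rewrite /p -addrA [t *: _ - a]addrC addrACA subrr add0r.
    apply: rv_norm_le => // i; rewrite !mxE.
    case: (ltnP i k) => ik.
      have -> : (i == k) = false by apply/eqP => E; move: ik; rewrite E ltnn.
      rewrite andbF mulr0 addr0; exact: rv_entry_le.
    rewrite add0r eqxx /=; case: (eqVneq i k) => [ik'|_] /=.
      by rewrite mulr1; apply: le_trans tk (rv_entry_le _ _).
    by rewrite mulr0 normr0.
  have Hk (k : 'I_n) : `|f (p k.+1) - f (p k) - h 0 k *: 'D_(delta_mx 0 k) f a|
      <= e' * `|h 0 k|.
    rewrite pS.
    have E0 : f (p k) = f (p k + 0 *: delta_mx 0 k) by rewrite scale0r addr0.
    rewrite [X in _ - X - _]E0.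
    apply: (seg_bound (g := fun t => f (p k + t *: delta_mx 0 k))).
      move=> t tk; apply/line_derivable; apply: Hder.
      by apply: le_lt_trans (pdist k t tk) _; apply: lt_le_trans hd _; rewrite ge_min lexx orbT.
    move=> t tk; rewrite line_derive distrC; apply: Hd1.
    rewrite -ball_normE /= distrC.
    by apply: le_lt_trans (pdist k t tk) _; apply: lt_le_trans hd _; rewrite ge_min lexx.
  have Esum : f (h + a) - (f a + h *m J) =
      \sum_(k < n) (f (p k.+1) - f (p k) - h 0 k *: 'D_(delta_mx 0 k) f a).
    rewrite sumrB -(big_mkord xpredT (fun k => f (p k.+1) - f (p k))).
    rewrite telescope_sumr // pn p0 hJ opprD addrA.
    by [].
  rewrite Esum; apply: le_trans (ler_norm_sum _ _ _) _.
  apply: le_trans (_ : \sum_(k < n) e' * `|h| <= _).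
    apply: ler_sum => k _; apply: le_trans (Hk k) _.
    by apply: ler_wpM2l; [exact: ltW | exact: rv_entry_le].
  rewrite sumr_const card_ord -mulr_natr -mulrA [_ * n%:R]mulrC mulrA.
  rewrite ler_wpM2r //.
  by rewrite /e' mulrAC ler_pdivrMr ?ltr0Sn // ler_pM2l // ler_nat.
have dL := diff_unique Lcont Ho.
apply/diff_locallyP; rewrite dL; split => //.
Qed.
End C1c.
Section Help.
Set Implicit Arguments. Unset Strict Implicit.
Variables (R : realType) (n : nat).
Local Notation V := 'rV[R]_n.

Lemma dot_delta (w : V) i : dot w (delta_mx 0 i) = w 0 i.
Proof.
rewrite /dot (bigD1 i) //= big1 => [|k ki]; first by rewrite !mxE !eqxx mulr1 addr0.
by rewrite !mxE (negbTE ki) andbF mulr0.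
Qed.

Lemma dot_suml (F : 'I_n -> V) (y : V) :
  dot (\sum_(k < n) F k) y = \sum_(k < n) dot (F k) y.
Proof.
rewrite /dot exchange_big /=; apply: eq_bigr => i _.
by rewrite summxE mulr_suml.
Qed.

Lemma derive_pact (s : 'S_n) (g : R -> V) t : derivable g t 1 ->
  derivable (fun x => pact s (g x)) t 1 /\
  'D_1 (fun x => pact s (g x)) t = pact s ('D_1 g t).
Proof.
move=> dg.
have E i j : (fun x => pact s (g x) i j) = (fun x => g x 0 ((s^-1)%g j)).
  by apply: funext => x; rewrite mxE.
have dg' : derivable (fun x => pact s (g x)) t 1.
  apply/derivable_mxP => i j; rewrite E.
  by move/derivable_mxP : dg; apply.
split => //.
apply/matrixP => i j; rewrite (derive_mx dg') !mxE E.
by rewrite (derive_mx dg) mxE.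
Qed.

Lemma pact_tperm (i j : 'I_n) (v : V) :
  v - pact (tperm i j) v = (v 0 i - v 0 j) *: (delta_mx 0 i - delta_mx 0 j).
Proof.
apply/rowP => k; rewrite !mxE tpermV.
case: tpermP => [->|->|/eqP ki /eqP kj].
- rewrite eqxx /=; case: (eqVneq i j) => [->|ij]; first by rewrite !subrr mul0r.
  by rewrite eqxx subr0 mulr1.
- rewrite eqxx /=; case: (eqVneq j i) => [->|ji]; first by rewrite !subrr mul0r.
  by rewrite eqxx sub0r mulrN1 opprB.
- by rewrite (negbTE ki) (negbTE kj) andbF subrr subrr mulr0.
Qed.

End Help.
Theorem theorem4p12 (R : realType) (n d : nat) (M : set 'rV[R]_n)
  (sstar sigma : 'S_n) (xbar : 'rV[R]_n) (delta delta1 delta2 : R)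
  (phi pT pN : 'rV[R]_n -> 'rV[R]_n) :
  let T := tangent_space M xbar in
  let N := normal_sp M xbar in
  let Nred := N `&` Deltapp sigma in
  let B := eball xbar delta in
  let piT := fun x => xbar + pT (x - xbar) in
  let calB := [set x | pdist [pred i | sstar i == i] x xbar < delta1 /\
                       pdist [pred i | sstar i != i] x xbar < delta2] in
  let D := [set x | subsum T Nred (x - xbar) /\ calB x] in
  let phib := phibar xbar phi pT pN in
  (* M : locally symmetric C^2 submanifold of dimension d, characteristic
     permutation sstar *)
  C2_submanifold d M -> locally_symmetric M -> characteristic_perm M sstar ->
  (* xbar, delta *)
  M xbar -> Delta sigma xbar -> 0 < delta ->
  (forall y (s' : 'S_n), B y -> Delta s' y -> refines s' sigma) ->
  strongly_locally_symmetric (M `&` B) ->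
  is_orth_proj T pT ->
  {in M `&` B &, injective piT} ->
  (* phi : (xbar + T) /\ B -> N, C^2, local graph description of M *)
  (forall y, T (y - xbar) -> B y -> N (phi y)) ->
  C2_on B (phi \o piT) ->
  M `&` B = [set y + phi y | y in [set y | T (y - xbar) /\ B y]] ->
  (* reduced normal space, box calB, domain D *)
  is_orth_proj Nred pN ->
  0 < delta1 -> 0 < delta2 -> calB `<=` B ->
  [/\ (* well defined, values in Nred *)
      (forall x, D x -> (T (piT x - xbar) /\ B (piT x)) /\ Nred (phib x)),
      (* local symmetry *)
      (forall x (s' : 'S_n), D x -> pact s' xbar = xbar ->
         phib (pact s' x) = phib x),
      (* local equation *)
      (forall x, D x -> (phib x = 0 <-> (M `&` B) x)) &
      (* Jacobian at xbar onto Nred *)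
      differentiable phib xbar /\
      (forall w, Nred w -> exists2 v, subsum T Nred v & 'd phib xbar v = w)].

Proof.
move=> T N Nred B piT calB D phib HC2 Hls Hchar Mx Dx dpos Hrefine Hsls HpT Hinj
  HphiN HC2phi Hgraph HpN d1 d2 HcalB.
have T0 : T 0.
  exists (fun _ : R => xbar), 1 => //; split => //.
  exact: derive_cst.
have Bx : B xbar.
  by rewrite /B /eball /= subrr /enorm dot0l sqrtr0.
have MBx : (M `&` B) xbar by [].
have N0 : N 0 by move=> v _; rewrite dot0l.
have NB : forall a b, N a -> N b -> N (a - b).
  by move=> a b Na Nb v Tv; rewrite dotBl Na // Nb // subrr.
have NZ : forall (c : R) a, N a -> N (c *: a).
  by move=> c a Na v Tv; rewrite dotZl Na // mulr0.
have NN : forall a, N a -> N (- a).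
  by move=> a Na; rewrite -scaleN1r; apply: NZ.
have ND : forall a b, N a -> N b -> N (a + b).
  by move=> a b Na Nb; rewrite -[b]opprK; apply: NB => //; apply: NN.
have P0 : Deltapp sigma (0 : 'rV[R]_n) by move=> i j ij; rewrite !mxE.
have PB : forall a b : 'rV[R]_n, Deltapp sigma a -> Deltapp sigma b -> Deltapp sigma (a - b).
  by move=> a b Pa Pb i j ij; rewrite !mxE (Pa _ _ ij) (Pb _ _ ij).
have PZ : forall (c : R) (a : 'rV[R]_n), Deltapp sigma a -> Deltapp sigma (c *: a).
  by move=> c a Pa i j ij; rewrite !mxE (Pa _ _ ij).
have PD : forall a b : 'rV[R]_n, Deltapp sigma a -> Deltapp sigma b -> Deltapp sigma (a + b).
  by move=> a b Pa Pb i j ij; rewrite !mxE (Pa _ _ ij) (Pb _ _ ij).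
have R0 : Nred 0 by [].
have RB : forall a b, Nred a -> Nred b -> Nred (a - b).
  by move=> a b [Na Pa] [Nb Pb]; split; [apply: NB | apply: PB].
have RZ : forall (c : R) a, Nred a -> Nred (c *: a).
  by move=> c a [Na Pa]; split; [apply: NZ | apply: PZ].
have RD : forall a b, Nred a -> Nred b -> Nred (a + b).
  by move=> a b [Na Pa] [Nb Pb]; split; [apply: ND | apply: PD].
have pTdec : forall t w, T t -> N w -> pT (t + w) = t.
  move=> t w Tt Nw; apply: (@proj_uniq _ _ T (t + w)) => //.
  - exact: (HpT _).1.
  - exact: (HpT _).2.
  - by move=> v Tv; rewrite [t + w]addrC addrK Nw.
have pNfix : forall r, Nred r -> pN r = r.
  move=> r Rr; apply: (@proj_uniq _ _ Nred r) => //.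
  - exact: (HpN _).1.
  - exact: (HpN _).2.
  - by move=> v _; rewrite subrr dot0l.
have Bopen : open B := HC2phi.1.
have Tinv : forall s, pact s xbar = xbar -> forall v, T v -> T (pact s v).
  move=> s Hs v [g [e e0 [Hg g0 dg Dg]]].
  have /derivable1_diffP/differentiable_continuous gc := dg.
  have HB : nbhs (g 0) B by rewrite g0; apply: open_nbhs_nbhs; split.
  have /nbhs_ballP [e2 /= e20 He2] := gc B HB.
  exists (fun t => pact s (g t)), (Num.min e e2).
    by rewrite lt_min e0 e20.
  split.
  - move=> t; rewrite lt_min => /andP [te te2].
    have MBg : (M `&` B) (g t).
      split; first exact: Hg.
      by apply: He2; rewrite -ball_normE /= sub0r normrN.
    have : (M `&` B) (pact s (g t)).
      by rewrite -(Hsls.2 xbar s MBx Hs); exists (g t).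
    by case.
  - by rewrite g0 Hs.
  - exact: (derive_pact s dg).1.
  - by rewrite (derive_pact s dg).2 Dg.
have pinvx : forall s, pact s xbar = xbar -> pact (s^-1)%g xbar = xbar.
  by move=> s Hs; rewrite -{1}Hs pactK.
have Ninv : forall s, pact s xbar = xbar -> forall w, N w -> N (pact s w).
  move=> s Hs w Nw v Tv; rewrite dot_pact; apply: Nw; apply: Tinv => //.
  exact: pinvx.
have equiv : forall s, pact s xbar = xbar -> forall y, T (y - xbar) -> B y ->
    phi (pact s y) = pact s (phi y).
  move=> s Hs y Ty By.
  have MBz : (M `&` B) (y + phi y) by rewrite Hgraph; exists y.
  have MBz' : (M `&` B) (pact s (y + phi y)).
    by rewrite -(Hsls.2 xbar s MBx Hs); exists (y + phi y).
  move: MBz'; rewrite Hgraph => -[y' [Ty' By'] Ey'].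
  have E1 : pT (pact s (y + phi y) - xbar) = pact s (y - xbar).
    have -> : pact s (y + phi y) - xbar = pact s (y - xbar) + pact s (phi y).
      by rewrite pactD pactB Hs addrAC.
    apply: pTdec; [apply: Tinv | apply: Ninv] => //; exact: HphiN.
  have E2 : pT (pact s (y + phi y) - xbar) = y' - xbar.
    rewrite -Ey' addrAC; apply: pTdec => //; exact: HphiN.
  have yy : y' = pact s y.
    by move: E1; rewrite E2 pactB Hs => /(congr1 (fun z => z + xbar)); rewrite !subrK.
  rewrite -yy; apply: (@addrI _ y'); rewrite Ey' pactD yy.
  by [].
have Dppfix : forall s, pact s xbar = xbar -> forall w : 'rV[R]_n, Deltapp sigma w -> pact s w = w.
  move=> s Hs w Pw; apply/rowP => i; rewrite mxE.
  have : xbar 0 ((s^-1)%g i) = xbar 0 i by rewrite -{2}Hs mxE.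
  move/esym/(Dx i) => H; exact/esym/(Pw _ _ H).
have phiDpp : forall y, T (y - xbar) -> B y -> Deltapp sigma (phi y).
  move=> y Ty By i j ij.
  pose tau := tperm i j.
  have xij : xbar 0 i = xbar 0 j := (Dx i j).2 ij.
  have Htau : pact tau xbar = xbar.
    apply/rowP => k; rewrite mxE tpermV.
    by case: tpermP => [->|->|//]; rewrite xij.
  have Nphi := HphiN y Ty By.
  have yE : y = (y - xbar) + xbar by rewrite subrK.
  case: (eqVneq ((y - xbar) 0 i) ((y - xbar) 0 j)) => vij.
  - have Hy : pact tau y = y.
      apply/rowP => k; rewrite mxE tpermV.
      case: tpermP => [->|->|//]; rewrite [y]yE !mxE.
      + by move: vij; rewrite !mxE => ->; rewrite xij.
      + by move: vij; rewrite !mxE => ->; rewrite xij.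
    have := equiv tau Htau y Ty By; rewrite Hy => E.
    have := congr1 (fun z : 'rV[R]_n => z 0 i) E; rewrite /= mxE tpermV tpermL.
    by [].
  - have Ttv : T (pact tau (y - xbar)) := Tinv tau Htau _ Ty.
    have h1 := Nphi _ Ty.
    have h2 := Nphi _ Ttv.
    have : dot (phi y) ((y - xbar) - pact tau (y - xbar)) = 0.
      by rewrite dotBr h1 h2 subrr.
    rewrite pact_tperm dotZr dotBr !dot_delta => /eqP.
    rewrite mulf_eq0 subr_eq0 (negbTE vij) /= subr_eq0 => /eqP.
    by [].
have pTnorm : forall u, enorm (pT u) <= enorm u.
  move=> u; rewrite /enorm ler_sqrt ?dot_ge0 //.
  set q := pT u.
  have Hq : dot (u - q) q = 0 := (HpT u).2 q (HpT u).1.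
  have -> : dot u u = dot q q + dot (u - q) (u - q).
    by rewrite -pythag // subrK.
  by rewrite lerDl dot_ge0.
have eqpi : forall x, piT x - xbar = pT (x - xbar).
  by move=> x; rewrite /piT addrAC subrr add0r.
have phibE : forall x, phib x = phi (piT x) - pN (x - xbar).
  by move=> x; rewrite /phib /phibar [xbar + phi _]addrC addrKA.
have part1 : forall x, D x -> (T (piT x - xbar) /\ B (piT x)) /\ Nred (phib x).
  move=> x [Sx Cx]; have Bx' : B x := HcalB x Cx.
  have TpiT : T (piT x - xbar) by rewrite eqpi; exact: (HpT _).1.
  have BpiT : B (piT x).
    rewrite /B /eball /= eqpi; apply: le_lt_trans (pTnorm _) _; exact: Bx'.
  split => //; rewrite phibE; apply: RB; last exact: (HpN _).1.
  by split; [exact: HphiN | exact: phiDpp].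
have pNinv : forall s, pact s xbar = xbar -> forall u, pN (pact s u) = pN u.
  move=> s Hs u; apply: (@proj_uniq _ _ Nred u).
  - exact: (HpN _).1.
  - exact: (HpN _).1.
  - move=> r Rr; have := (HpN (pact s u)).2 r Rr.
    by rewrite !dotBl dot_pact (Dppfix _ (pinvx s Hs) r Rr.2).
  - exact: (HpN _).2.
have pTinv : forall s, pact s xbar = xbar -> forall u, pT (pact s u) = pact s (pT u).
  move=> s Hs u; apply: (@proj_uniq _ _ T (pact s u)).
  - exact: (HpT _).1.
  - by apply: Tinv => //; exact: (HpT _).1.
  - exact: (HpT _).2.
  - move=> v Tv; rewrite -pactB dot_pact; apply: (HpT u).2; apply: Tinv => //.
    exact: pinvx.
have part2 : forall x s, D x -> pact s xbar = xbar -> phib (pact s x) = phib x.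
  move=> x s Dx' Hs; have [[Tp Bp] _] := part1 x Dx'.
  rewrite !phibE.
  have -> : pact s x - xbar = pact s (x - xbar) by rewrite pactB Hs.
  rewrite pNinv //; congr (_ - _).
  have -> : piT (pact s x) = pact s (piT x).
    by rewrite /piT pactD Hs -pTinv // pactB Hs.
  rewrite equiv // Dppfix //; exact: phiDpp.
have part3 : forall x, D x -> (phib x = 0 <-> (M `&` B) x).
  move=> x Dx'; have [[Tp Bp] _] := part1 x Dx'.
  case: Dx' => [[t Tt [r Rr Etr]] _].
  have pTu : pT (x - xbar) = t by rewrite -Etr pTdec //; case: Rr.
  have pNu : pN (x - xbar) = r.
    rewrite -Etr; apply: (@proj_uniq _ _ Nred (t + r)) => //.
    - exact: (HpN _).1.
    - exact: (HpN _).2.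
    - by move=> v [Nv _]; rewrite addrK dotC; apply: Nv.
  have piTx : piT x = xbar + t by rewrite /piT pTu.
  rewrite phibE piTx pNu; split.
  - move/eqP; rewrite subr_eq0 => /eqP Ephi; rewrite Hgraph.
    exists (xbar + t).
      by split; [rewrite addrAC subrr add0r | rewrite -piTx].
    by rewrite Ephi -addrA Etr addrC subrK.
  - rewrite Hgraph => -[y' [Ty' By'] Ey'].
    have : pT (x - xbar) = y' - xbar.
      by rewrite -Ey' addrAC pTdec //; exact: HphiN.
    rewrite pTu => ty.
    have yE : y' = xbar + t by rewrite ty addrC subrK.
    have : t + r = t + phi y' by rewrite Etr -Ey' addrAC -ty.
    by move/addrI => ->; rewrite yE subrr.
have [Bop HF] := HC2phi.
have : nbhs xbar B by apply: open_nbhs_nbhs; split.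
move/nbhs_ballP => [r /= r0 Hr].
have dF : differentiable (phi \o piT) xbar.
  apply: (@C1_diff R n n (phi \o piT) xbar r r0).
  - move=> z zr v.
    have Bz : B z by apply: Hr; rewrite -ball_normE /= distrC.
    by have [] := HF z Bz v v.
  - by move=> v; have [] := HF xbar Bx v v.
pose P := \matrix_(k < n) pN (delta_mx 0 k).
have pNlin : forall x, pN x = x *m P.
  move=> x; apply: (@proj_uniq _ _ Nred x).
  - exact: (HpN _).1.
  - rewrite mulmx_sum_row; apply: big_ind => //.
    move=> k _; rewrite rowK; apply: RZ; exact: (HpN _).1.
  - exact: (HpN _).2.
  - move=> v Rv; rewrite {1}(row_sum_delta x) mulmx_sum_row -sumrB dot_suml.
    rewrite big1 // => k _; rewrite rowK -scalerBr dotZl (HpN _).2 // mulr0.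
    by [].
have dP : differentiable (mulmxr P : 'rV[R]_n -> 'rV[R]_n) xbar.
  apply: linear_differentiable; exact: mulmx_cont.
have dphib : differentiable phib xbar.
  have -> : phib = (fun x => xbar + (phi \o piT) x - (xbar + (mulmxr P x - mulmxr P xbar))).
    by apply: funext => x; rewrite /phib /phibar /= -mulmxBl -pNlin.
  apply: differentiableB; apply: differentiableD => //.
  by apply: differentiableB.
split => //.
split => // w Rw.
have Rw' : Nred (- w) by rewrite -scaleN1r; apply: RZ.
exists (- w).
  by exists 0; last (exists (- w); rewrite ?add0r).
rewrite -deriveE //.
have pT00 : pT 0 = 0 by have := pTdec 0 0 T0 N0; rewrite addr0.
apply/lim_near_cst => //=.
near=> h.
have h0 : h != 0 by near: h; exact: nbhs_dnbhs_neq.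
have pT0w : pT (h *: - w) = 0.
  by rewrite -[h *: -w]add0r pTdec //; apply: NZ; case: Rw'.
have E1 : phib (h *: - w + xbar) = phi xbar - h *: - w.
  rewrite phibE /piT addrK pT0w addr0 pNfix //; exact: RZ.
have E2 : phib xbar = phi xbar.
  by rewrite phibE /piT subrr pT00 addr0 pNfix // subr0.
rewrite E1 E2 addrAC subrr add0r !scalerN opprK scalerA mulVf // scale1r.
by [].
Unshelve. all: by end_near.
Qed.
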